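(* The PIR capacity of the star graph $S_N$ on $N$ vertices satisfies $\mathscr{C}(S_N)\ge \frac{2}{N}$.
   Context: The star graph $S_N$ has $N$ vertices (servers), one (server $N$) of degree $N-1$ and the others of degree $1$; there are $K=N-1$ files, file $W_i$ stored on leaf server $i$ and on server $N$. Graph-based PIR model: files are independent, each uniform on $\mathbb{F}_2^L$; a user wants $W_\theta$, $\theta$ uniform on $[K]$ and independent of the files; it sends queries $Q_1,\dots,Q_N$ (independent of the files); server $i$ answers $A_i$, a deterministic function of $Q_i$ and the files on it. Reliability: $W_\theta$ is determined by all answers and queries. Privacy: $H(\theta\mid Q_i,W_{S_i})=\log K$ for every $i$, $W_{S_i}$ being the files on server $i$. The rate is $L/\sum_i H(A_i)$; the PIR capacity is the supremum of rates over all schemes and file lengths $L$. *)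

(* Defs.v *)
From HB Require Import structures.
From mathcomp Require Import all_boot all_order all_algebra.
From mathcomp Require Import reals exp.
Set Implicit Arguments. Unset Strict Implicit. Unset Printing Implicit Defensive.
Import Order.TTheory GRing.Theory Num.Theory.
Local Open Scope ring_scope.

(* Logarithm in base 2 (entropies measured in bits, file length L in bits). *)
Definition log2 {R : realType} (x : R) : R := ln x / ln 2.

Definition prob {R : realType} {Om : finType} (P : Om -> R) (E : pred Om) : R :=
  \sum_(w : Om | E w) P w.

(* Shannon entropy (bits) of a discrete random variable X : Om -> T:
   H(X) = - sum_x Pr[X=x] log2 Pr[X=x], written as an expectation over Om
   (terms with P w = 0 vanish, so 0 log 0 is never evaluated). *)
Definition entropy {R : realType} {Om : finType} {T : eqType}
  (P : Om -> R) (X : Om -> T) : R :=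
  - \sum_(w : Om) P w * log2 (prob P (fun v => X v == X w)).

Definition centropy {R : realType} {Om : finType} {T U : eqType}
  (P : Om -> R) (X : Om -> T) (Y : Om -> U) : R :=
  entropy P (fun w => (X w, Y w)) - entropy P Y.

(* A file is an element of F_2^L; the library is the K-tuple of files, K = N-1. *)
Definition file (L : nat) := {ffun 'I_L -> bool}.
Definition library (N L : nat) := {ffun 'I_N.-1 -> file L}.

(* Star graph S_N: servers 'I_N (server N of the paper is the last one, index
   N-1 here); file k ('I_(N-1)) is stored on leaf server k and on the centre. *)
Definition star_stores (N : nat) (i : 'I_N) (k : 'I_N.-1) : bool :=
  (val i == val k) || (val i == N.-1).

Definition stored_files (N L : nat) (i : 'I_N) (wl : library N L)
  : {ffun 'I_N.-1 -> option (file L)} :=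
  [ffun k => if star_stores i k then Some (wl k) else None].

(* A PIR scheme on S_N with file length L:
   P  : pmf on the finite sample space Om,
   W  : the files, th : the desired index,
   Q  : the queries (Q w i is the query to server i),
   f i: the deterministic answer function of server i. *)
Record star_PIR_scheme (R : realType) (N L : nat) (Om : finType) (QT AT : eqType)
  (P : Om -> R) (W : Om -> library N L) (th : Om -> 'I_N.-1)
  (Q : Om -> {ffun 'I_N -> QT}) (f : 'I_N -> QT -> library N L -> AT) : Prop := {
  pmf_ge0 : forall w, 0 <= P w;
  pmf_sum1 : \sum_(w : Om) P w = 1;
  files_indep : forall wl : library N L,
    prob P (fun v => W v == wl) = \prod_(k : 'I_N.-1) prob P (fun v => W v k == wl k);
  files_unif : forall (k : 'I_N.-1) (x : file L),
    prob P (fun v => W v k == x) = 1 / 2 ^+ L;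
  theta_unif : forall t : 'I_N.-1, prob P (fun v => th v == t) = 1 / (N.-1)%:R;
  theta_indep : forall (t : 'I_N.-1) (wl : library N L),
    prob P (fun v => (th v == t) && (W v == wl))
    = prob P (fun v => th v == t) * prob P (fun v => W v == wl);
  queries_indep : forall (t : 'I_N.-1) (q : {ffun 'I_N -> QT}) (wl : library N L),
    prob P (fun v => [&& th v == t, Q v == q & W v == wl])
    = prob P (fun v => (th v == t) && (Q v == q)) * prob P (fun v => W v == wl);
  answer_local : forall (i : 'I_N) (q : QT) (wl wl' : library N L),
    (forall k, star_stores i k -> wl k = wl' k) -> f i q wl = f i q wl';
  reliable :
    centropy P (fun v => W v (th v))
      (fun v => ([ffun i => f i (Q v i) (W v)], Q v, th v)) = 0;
  private : forall i : 'I_N,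
    centropy P th (fun v => (Q v i, stored_files i (W v))) = log2 (N.-1)%:R
}.

Definition star_rate (R : realType) (N L : nat) (Om : finType) (QT AT : eqType)
  (P : Om -> R) (W : Om -> library N L)
  (Q : Om -> {ffun 'I_N -> QT}) (f : 'I_N -> QT -> library N L -> AT) : R :=
  L%:R / \sum_(i : 'I_N) entropy P (fun v => f i (Q v i) (W v)).

Definition star_achievable_rate (R : realType) (N : nat) (r : R) : Prop :=
  exists (L : nat) (Om : finType) (QT AT : eqType) (P : Om -> R)
    (W : Om -> library N L) (th : Om -> 'I_N.-1)
    (Q : Om -> {ffun 'I_N -> QT}) (f : 'I_N -> QT -> library N L -> AT),
    (0 < L)%N /\ star_PIR_scheme P W th Q f /\ r = star_rate P W Q f.

(* Main.v *)
Require Import Defs.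
From HB Require Import structures.
From mathcomp Require Import all_boot all_order all_algebra.
From mathcomp Require Import reals exp.
From mathcomp Require Import all_fingroup lra.
Import Order.TTheory GRing.Theory Num.Theory.
Local Open Scope ring_scope.
Section Generic.
Variable R : realType.

Lemma eq_prob (Om : finType) (P : Om -> R) (E E' : pred Om) :
  (forall w, E w = E' w) -> prob P E = prob P E'.
Proof. by move=> H; rewrite /prob; apply: eq_bigl. Qed.

Lemma prob_reindex (Om : finType) (c : R) (s : Om -> Om) (E : pred Om) :
  bijective s -> prob (fun _ => c) E = prob (fun _ => c) (fun w => E (s w)).
Proof. by move=> bs; rewrite /prob (reindex_inj (bij_inj bs)). Qed.

Lemma cond_unif (Om T : finType) (c : R) (E : pred Om) (X : Om -> T) :
  (forall x y : T, exists s : Om -> Om, [/\ bijective s,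
      forall w, E (s w) = E w & forall w, (X (s w) == x) = (X w == y)]) ->
  forall x, prob (fun _ => c) (fun w => E w && (X w == x))
            = prob (fun _ => c) E / #|T|%:R.
Proof.
move=> H x.
have eqp : forall y, prob (fun _ => c) (fun w => E w && (X w == x))
                   = prob (fun _ => c) (fun w => E w && (X w == y)).
  move=> y; have [s [bs HE HX]] := H x y.
  rewrite (@prob_reindex _ c s _ bs); apply: eq_prob => w /=; by rewrite HE HX.
have tot : prob (fun _ => c) E
   = \sum_(y : T) prob (fun _ => c) (fun w => E w && (X w == y)).
  by rewrite /prob (partition_big X predT).
have cT : (0 < #|T|)%N by apply/card_gt0P; exists x.
rewrite tot (eq_bigr (fun _ => prob (fun _ => c) (fun w => E w && (X w == x))));
  last by move=> y _; rewrite -eqp.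
rewrite sumr_const -[X in _ = X / _]mulr_natr mulfK //.
by rewrite pnatr_eq0 -lt0n.
Qed.

Lemma unif (Om T : finType) (c : R) (X : Om -> T) :
  \sum_(w : Om) c = 1 ->
  (forall x y : T, exists s : Om -> Om, bijective s /\
      forall w, (X (s w) == x) = (X w == y)) ->
  forall x, prob (fun _ => c) (fun w => X w == x) = 1 / #|T|%:R.
Proof.
move=> S1 H x.
have := @cond_unif Om T c (fun _ => true) X _ x.
rewrite /= => ->. by rewrite /prob S1.
move=> x0 y0; have [s [bs HX]] := H x0 y0; by exists s.
Qed.

Lemma entropy_const (Om : finType) (T : eqType) (P : Om -> R) (X : Om -> T) a :
  \sum_(w : Om) P w = 1 ->
  (forall w, prob P (fun v => X v == X w) = a) -> entropy P X = - log2 a.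
Proof.
move=> S1 H; rewrite /entropy (eq_bigr (fun w => P w * log2 a)).
  by rewrite -big_distrl /= S1 mul1r.
by move=> w _; rewrite H.
Qed.

Lemma centropy_det (Om : finType) (T U : eqType) (P : Om -> R)
  (X : Om -> T) (Y : Om -> U) :
  (forall v w, Y v = Y w -> X v = X w) -> centropy P X Y = 0.
Proof.
move=> H; rewrite /centropy /entropy.
rewrite (eq_bigr (fun w => P w * log2 (prob P (fun v => Y v == Y w)))) ?subrr //.
move=> w _; congr (_ * log2 _); apply: eq_prob => v.
rewrite xpair_eqE; case: (Y v =P Y w) => [/(H v w) -> | _]; by rewrite ?eqxx ?andbF.
Qed.

Lemma log2_div (a b : R) : 0 < a -> 0 < b -> log2 (a / b) = log2 a - log2 b.
Proof.
move=> a0 b0; rewrite /log2 lnM ?posrE ?invr_gt0 // lnV ?posrE //.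
by rewrite mulrBl.
Qed.

Lemma centropy_unif (Om T : finType) (U : eqType) (c : R)
  (X : Om -> T) (Y : Om -> U) : 0 < c -> \sum_(w : Om) c = 1 ->
  (forall x y : T, exists s : Om -> Om, [/\ bijective s,
      forall w, Y (s w) = Y w & forall w, (X (s w) == x) = (X w == y)]) ->
  centropy (fun _ => c) X Y = log2 #|T|%:R.
Proof.
move=> c0 S1 H; rewrite /centropy /entropy.
have cT : (0 < #|T|)%N.
  apply/card_gt0P.
  have : (0 < #|Om|)%N.
    rewrite lt0n; apply/eqP => E; move: S1; rewrite sumr_const E mulr0n.
    by move/esym/eqP; rewrite oner_eq0.
  by case/card_gt0P => w _; exists (X w).
have pos : forall w, 0 < prob (fun _ => c) (fun v => Y v == Y w).
  move=> w; rewrite /prob (bigD1 w) //=.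
  have : 0 <= \sum_(i | (Y i == Y w) && (i != w)) c by apply: sumr_ge0 => *; lra.
  lra.
rewrite (eq_bigr (fun w => c * (log2 (prob (fun _ => c) (fun v => Y v == Y w))
                               - log2 #|T|%:R))); last first.
  move=> w _; congr (_ * _).
  rewrite -log2_div ?ltr0n //; congr log2.
  rewrite -(@cond_unif Om T c (fun v => Y v == Y w) X _ (X w)) //.
    apply: eq_prob => v; by rewrite xpair_eqE andbC.
  move=> x y; have [s [bs HY HX]] := H x y; exists s; split => // v.
  by rewrite HY.
rewrite (eq_bigr (fun w => c * log2 (prob (fun _ => c) (fun v => Y v == Y w))
                          - c * log2 #|T|%:R)); last by move=> w _; rewrite mulrBr.
rewrite sumrB -big_distrl /= S1 mul1r.
set A := \sum_(w : Om) _. lra.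
Qed.

End Generic.
Section Scheme.
Variable R : realType.
Variable n : nat.

Notation Om := ('I_n.+1 * {ffun 'I_n.+1 -> 'I_2} * library n.+2 2)%type.
Notation QT := {ffun 'I_n.+1 -> 'I_2}.

Definition th (w : Om) : 'I_n.+1 := w.1.1.
Definition sv (w : Om) : QT := w.1.2.
Definition Wf (w : Om) : library n.+2 2 := w.2.
Definition flip (j : 'I_2) : 'I_2 := if j == ord0 then ord_max else ord0.
Definition tq (t : 'I_n.+1) (s : QT) : QT :=
  [ffun k => if k == t then flip (s k) else s k].
Definition Qf (w : Om) : {ffun 'I_n.+2 -> QT} :=
  [ffun i : 'I_n.+2 => if (val i < n.+1)%N then sv w else tq (th w) (sv w)].
Definition fa (i : 'I_n.+2) (q : QT) (wl : library n.+2 2) : bool :=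
  if (val i < n.+1)%N then wl (inord i) (q (inord i))
  else \big[addb/false]_(k < n.+1) wl k (q k).
Definition cc : R := (#|{: Om}|%:R)^-1.

Lemma flipK : involutive flip.
Proof. by case=> [[|[|m]] Hm] //; apply: val_inj. Qed.
Lemma flip_cases (j s : 'I_2) : j = s \/ j = flip s.
Proof.
case: j => [[|[|m]] Hm] //; case: s => [[|[|m']] Hm'] //;
  rewrite /flip /=; by [left; apply: val_inj | right; apply: val_inj].
Qed.
Lemma tqK t : involutive (tq t).
Proof. by move=> s; apply/ffunP => k; rewrite !ffunE; case: eqP => // _; rewrite flipK. Qed.

Lemma card_Om_gt0 : (0 < #|{: Om}|)%N.
Proof. apply/card_gt0P; by exists ((ord0, [ffun _ => ord0]), [ffun _ => [ffun _ => false]]). Qed.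

Lemma cc_gt0 : 0 < cc.
Proof. by rewrite /cc invr_gt0 ltr0n card_Om_gt0. Qed.

Lemma sum_cc : \sum_(w : Om) cc = 1.
Proof.
rewrite sumr_const /cc -[X in X = _]mulr_natr mulVf //.
by rewrite pnatr_eq0 -lt0n card_Om_gt0.
Qed.

Definition addL (a d : library n.+2 2) : library n.+2 2 :=
  [ffun k => [ffun j => a k j (+) d k j]].
Lemma addLK d : involutive (addL ^~ d).
Proof. move=> a; apply/ffunP => k; apply/ffunP => j; rewrite !ffunE; by case: (a k j); case: (d k j). Qed.
Definition sW (d : library n.+2 2) (w : Om) : Om := (w.1, addL w.2 d).
Lemma sW_bij d : bijective (sW d).
Proof. by apply: inv_bij => w; rewrite /sW /= addLK; case: w. Qed.

Definition sT (x y : 'I_n.+1) (w : Om) : Om := ((tperm x y w.1.1, w.1.2), w.2).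
Lemma sT_bij x y : bijective (sT x y).
Proof. by apply: inv_bij => [[[a b] c]]; rewrite /sT /= tpermK. Qed.
Definition sC (x y : 'I_n.+1) (w : Om) : Om :=
  ((tperm x y w.1.1, tq (tperm x y w.1.1) (tq w.1.1 w.1.2)), w.2).
Lemma sC_bij x y : bijective (sC x y).
Proof. by apply: inv_bij => [[[a b] c]]; rewrite /sC /= tpermK !tqK. Qed.

Lemma tperm_eq (x y z : 'I_n.+1) : (tperm x y z == x) = (z == y).
Proof.
apply/eqP/eqP => [h|->]; last exact: tpermR.
by rewrite -(tpermK x y z) h tpermL.
Qed.


Definition ans (w : Om) : {ffun 'I_n.+2 -> bool} := [ffun i => fa i (Qf w i) (Wf w)].

Lemma leaf_val (k : 'I_n.+1) : val (inord k : 'I_n.+2) = k.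
Proof. by rewrite /= inordK // (leqW (ltn_ord k)). Qed.
Lemma leaf_lt (k : 'I_n.+1) : (val (inord k : 'I_n.+2) < n.+1)%N.
Proof. by rewrite leaf_val. Qed.
Lemma leaf_inord (k : 'I_n.+1) : (inord (inord k : 'I_n.+2) : 'I_n.+1) = k.
Proof. by apply: val_inj; rewrite /= leaf_val inordK. Qed.

Lemma ans_leaf w (k : 'I_n.+1) : ans w (inord k) = Wf w k (sv w k).
Proof. by rewrite /ans /fa /Qf !ffunE leaf_lt leaf_inord. Qed.
Lemma ans_center w : ans w ord_max =
  \big[addb/false]_(k < n.+1) Wf w k (tq (th w) (sv w) k).
Proof. by rewrite /ans /fa /Qf !ffunE /= ltnn. Qed.

Lemma decode (v w : Om) : (ans v, Qf v, th v) = (ans w, Qf w, th w) ->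
  Wf v (th v) = Wf w (th w).
Proof.
move=> E.
have Ha : ans v = ans w := congr1 (fun p => p.1.1) E.
have Hq : Qf v = Qf w := congr1 (fun p => p.1.2) E.
have Ht : th v = th w := congr1 (fun p => p.2) E.
have Hs : sv v = sv w.
  by have := congr1 (fun f : {ffun _ -> _} => f ord0) Hq; rewrite /Qf !ffunE /=.
have Hl : forall k, Wf v k (sv w k) = Wf w k (sv w k).
  by move=> k; rewrite -[in LHS]Hs -ans_leaf Ha ans_leaf.
rewrite Ht; apply/ffunP => j.
case: (flip_cases j (sv w (th w))) => ->; first exact: Hl.
have Hc := congr1 (fun f : {ffun _ -> _} => f ord_max) Ha; rewrite /= !ans_center Ht Hs in Hc.
rewrite (bigD1 (th w)) // [in RHS](bigD1 (th w)) //= in Hc.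
have Hr : \big[addb/false]_(k < n.+1 | k != th w) Wf v k (tq (th w) (sv w) k)
        = \big[addb/false]_(k < n.+1 | k != th w) Wf w k (tq (th w) (sv w) k).
  apply: eq_bigr => k /negbTE hk; rewrite /tq ffunE hk; exact: Hl.
rewrite Hr /tq ffunE eqxx in Hc.
exact: addIb Hc.
Qed.


Lemma addL_eq (a x y : library n.+2 2) : (addL a (addL x y) == x) = (a == y).
Proof.
apply/eqP/eqP => [H|->]; apply/ffunP => k; apply/ffunP => j.
  have := congr1 (fun f : library n.+2 2 => f k j) H; rewrite /= !ffunE.
  by case: (a k j); case: (x k j); case: (y k j).
by rewrite !ffunE; case: (x k j); case: (y k j).
Qed.

Lemma sym_W : forall x y : library n.+2 2, exists s : Om -> Om,
  [/\ bijective s, forall w, th (s w) = th w /\ Qf (s w) = Qf w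
    & forall w, (Wf (s w) == x) = (Wf w == y)].
Proof.
move=> x y; exists (sW (addL x y)); split; first exact: sW_bij.
  by move=> w; split.
by move=> w; rewrite /Wf /sW /= addL_eq.
Qed.

Lemma sym_Wk (k : 'I_n.+1) : forall x y : file 2, exists s : Om -> Om,
  bijective s /\ forall w, (Wf (s w) k == x) = (Wf w k == y).
Proof.
move=> x y; exists (sW (addL [ffun _ => x] [ffun _ => y])); split; first exact: sW_bij.
move=> w; rewrite /Wf /sW /= /addL ffunE; apply/eqP/eqP => H; apply/ffunP => j.
  have := congr1 (fun f : file 2 => f j) H; rewrite /= !ffunE.
  by case: (w.2 k j); case: (x j); case: (y j).
by rewrite ffunE /= !ffunE H; case: (x j); case: (y j).
Qed.

Lemma sym_T : forall x y : 'I_n.+1, exists s : Om -> Om,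
  bijective s /\ forall w, (th (s w) == x) = (th w == y).
Proof.
move=> x y; exists (sT x y); split; first exact: sT_bij.
by move=> w; rewrite /th /sT /= tperm_eq.
Qed.

Lemma log2_half : - log2 (1 / 2%:R : R) = 1.
Proof.
have l2 : 0 < ln (2%:R : R) by apply: ln_gt0; rewrite ltr1n.
rewrite /log2 div1r lnV ?posrE ?ltr0n // mulNr opprK divff //.
by rewrite gt_eqF.
Qed.

Lemma ans_entropy i : entropy (fun _ => cc) (fun v => fa i (Qf v i) (Wf v)) = 1.
Proof.
rewrite (@entropy_const _ _ _ _ _ (1 / 2%:R)); first exact: log2_half.
  exact: sum_cc.
move=> w.
suff H : forall x y : bool, exists s : Om -> Om, bijective s /\
   forall v, (fa i (Qf (s v) i) (Wf (s v)) == x) = (fa i (Qf v i) (Wf v) == y).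
  by rewrite (@unif _ _ _ _ _ sum_cc H) card_bool.
move=> x y; rewrite /fa /Qf.
case Hi: (val i < n.+1)%N.
  exists (sW [ffun _ => [ffun _ => x (+) y]]); split; first exact: sW_bij.
  move=> v; rewrite /sW /Wf /sv /= !ffunE Hi /= ?ffunE /=.
  by case: (v.2 _ _); case: x; case: y.
exists (sW [ffun k => [ffun _ => (k == ord0) && (x (+) y)]]); split; first exact: sW_bij.
move=> v; rewrite /sW /Wf /sv /th /= !ffunE Hi /=.
rewrite (eq_bigr (fun k => v.2 k (tq v.1.1 v.1.2 k) (+) ((k == ord0) && (x (+) y))));
  last by move=> k _; rewrite !ffunE.
rewrite big_split /=.
have -> : forall z, \big[addb/false]_(k < n.+1) ((k == ord0) && z) = z.
  by move=> z; rewrite (bigD1 ord0) //= big1 ?addbF // => k /negbTE ->.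
by case: (\big[addb/false]_(k < n.+1) _); case: x; case: y.
Qed.

Lemma privacy (i : 'I_n.+2) :
  centropy (fun _ => cc) th (fun v => (Qf v i, stored_files i (Wf v)))
  = log2 (n.+1)%:R.
Proof.
rewrite -[in RHS](card_ord n.+1); apply: centropy_unif cc_gt0 sum_cc _.
move=> x y; case Hi: (val i < n.+1)%N.
  exists (sT x y); split; first exact: sT_bij.
    by move=> w; rewrite /Qf !ffunE Hi.
  by move=> w; rewrite /th /sT /= tperm_eq.
exists (sC x y); split; first exact: sC_bij.
  by move=> w; rewrite /Qf !ffunE Hi /th /sv /sC /= tqK.
by move=> w; rewrite /th /sC /= tperm_eq.
Qed.


Lemma card_lib : #|{: library n.+2 2}| = (#|{: file 2}| ^ n.+1)%N.
Proof. by rewrite card_ffun card_ord. Qed.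
Lemma card_file : #|{: file 2}| = 4%N.
Proof. by rewrite card_ffun card_bool card_ord. Qed.

Lemma probW (wl : library n.+2 2) :
  prob (fun _ : Om => cc) (fun v => Wf v == wl) = 1 / #|{: library n.+2 2}|%:R.
Proof.
apply: (@unif _ _ _ _ _ sum_cc) => x y; have [s [bs _ HX]] := sym_W x y; by exists s.
Qed.

Lemma scheme : star_PIR_scheme (fun _ : Om => cc) Wf th Qf fa.
Proof.
split.
- by move=> _; exact: ltW cc_gt0.
- exact: sum_cc.
- move=> wl; rewrite probW.
  rewrite (eq_bigr (fun _ => 1 / #|{: file 2}|%:R)); last first.
    by move=> k _; apply: (@unif _ _ _ _ _ sum_cc); apply: sym_Wk.
  by rewrite prodr_const card_ord card_lib natrX !div1r exprVn.
- move=> k x; rewrite (@unif _ _ _ _ _ sum_cc (sym_Wk k)) card_file.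
  by rewrite (_ : 4%N = 2 ^ 2)%N // natrX.
- move=> t; by rewrite (@unif _ _ _ _ _ sum_cc sym_T) card_ord.
- move=> t wl; rewrite probW.
  rewrite (@cond_unif _ _ _ _ (fun v => th v == t) Wf) ?div1r //.
  move=> x y; have [s [bs HE HX]] := sym_W x y; exists s; split => // w.
  by case: (HE w) => ->.
- move=> t q wl; rewrite probW.
  rewrite (@eq_prob _ _ _ _ (fun v => ((th v == t) && (Qf v == q)) && (Wf v == wl)));
    last by move=> v; rewrite andbA.
  rewrite (@cond_unif _ _ _ _ (fun v => (th v == t) && (Qf v == q)) Wf) ?div1r //.
  move=> x y; have [s [bs HE HX]] := sym_W x y; exists s; split => // w.
  by case: (HE w) => -> ->.
- move=> i q wl wl' H; rewrite /fa; case: ifP => Hi.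
    by rewrite H // /star_stores /= inordK ?eqxx // (leqW Hi).
  apply: eq_bigr => k _; rewrite H // /star_stores; apply/orP; right.
  by rewrite /= eqn_leq -ltnS ltn_ord leqNgt Hi.
- apply: centropy_det => v w E; exact: decode.
- move=> i; exact: privacy.
Qed.

End Scheme.

Theorem theorem5 (R : realType) (N : nat) (hN : (2 <= N)%N) (c : R) :
  (forall r : R, star_achievable_rate N r -> r <= c) -> 2 / N%:R <= c.
Proof.
case: N hN => [|[|n]] // _ Hc; apply: Hc.
exists 2%N, ('I_n.+1 * {ffun 'I_n.+1 -> 'I_2} * library n.+2 2)%type,
  {ffun 'I_n.+1 -> 'I_2}, bool, (fun _ => @cc R n), (@Wf n), (@th n), (@Qf n), (@fa n).
split => //; split; first exact: scheme.
rewrite /star_rate (eq_bigr (fun _ => 1)); last by move=> i _; exact: ans_entropy.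
by rewrite sumr_const card_ord.
Qed.
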